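(* Let $V$ be a vertex algebra and $M$ a subspace of $V$ containing $C_2(V)$ such that $M/C_2(V)$ is an ideal of the commutative associative algebra $V/C_2(V)$. Then $M$ is an $MZ_{0,-1}$-subspace of $V$.
   Context: A vertex algebra $(V,Y,\mathbf{1})$ is over $\mathbb{C}$; for $u\in V$ write $Y(u,z)=\sum_{n\in\mathbb{Z}}u_nz^{-n-1}$ with $u_n\in\operatorname{End}V$. Iterated products are nested to the right: $v_{n_1}\cdots v_{n_t}v=v_{n_1}(\cdots(v_{n_t}v))$. $C_2(V)=\operatorname{span}_{\mathbb{C}}\{u_{-2}v: u,v\in V\}$; $V/C_2(V)$ is a commutative associative unital algebra with product $(a+C_2(V))(b+C_2(V))=a_{-1}b+C_2(V)$. For a subspace $M\subseteq V$: $r_{0,-1}(M)$ is the set of $v\in V$ for which there is $m\ge 0$ with $v_{n_1}\cdots v_{n_t}v\in M$ for all $t\ge m$ and all $n_1,\dots,n_t\in\{0,-1\}$. $lsr_{0,-1}(M)$ is the set of $v\in V$ such that for every $b\in V$ there is $m\ge0$ with $b_sv_{n_1}\cdots v_{n_t}v\in M$ for all $t\ge m$ and all $s,n_1,\dots,n_t\in\{0,-1\}$. $rsr_{0,-1}(M)$ is the set of $v\in V$ such that for every $w\in V$ there is $m\ge 0$ with $(v_{n_1}\cdots v_{n_t}v)_nw\in M$ for all $t\ge m$ and all $n,n_1,\dots,n_t\in\{0,-1\}$. $sr_{0,-1}(M)=lsr_{0,-1}(M)\cap rsr_{0,-1}(M)$. $M$ is an $MZ_{0,-1}$-subspace of $V$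 if $r_{0,-1}(M)=sr_{0,-1}(M)$. *)

(* Defs.v *)
From HB Require Import structures.
From mathcomp Require Import all_boot all_order all_algebra complex.
From mathcomp Require Import Rstruct.
Set Implicit Arguments. Unset Strict Implicit. Unset Printing Implicit Defensive.
Import Order.TTheory GRing.Theory Num.Theory.
Local Open Scope ring_scope.

Definition CC : numClosedFieldType := (Rdefinitions.R)[i].

(* Generalized binomial coefficient binom(k, i) for k : int, i : nat,
   = k (k-1) ... (k-i+1) / i!.  For k = -(a+1) < 0 it equals (-1)^i C(a+i,i). *)
Definition binz (k : int) (i : nat) : int :=
  match k with
  | Posz a => ('C(a, i))%:Z
  | Negz a => (-1) ^+ i * ('C(a + i, i))%:Z
  end.

(* The n-th mode  u_n v  is  Y u v n, i.e. Y(u,z) = sum_n u_n z^{-n-1}. *)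
Section VA.
Variable V : lmodType CC.
Variable Y : V -> V -> int -> V.
Variable vac : V.

Definition va_linear : Prop :=
  (forall (a : CC) u u' v n, Y (a *: u + u') v n = a *: Y u v n + Y u' v n) /\
  (forall (a : CC) u v v' n, Y u (a *: v + v') n = a *: Y u v n + Y u v' n).

Definition va_truncation : Prop :=
  forall u v, exists N : int, forall n : int, N <= n -> Y u v n = 0.

Definition va_vacuum : Prop :=
  forall v n, Y vac v n = if n == -1 then v else 0.

Definition va_creation : Prop :=
  forall u, Y u vac (-1) = u /\ (forall n : int, 0 <= n -> Y u vac n = 0).

(* All sums are finite; we evaluate them as sums over i < N for any N beyond
   which all three families u_{k+i} v, v_{n+i} w, u_{m+i} w vanish. *)
Definition va_borcherds : Prop :=
  forall (u v w : V) (m k n : int) (N : nat),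
    (forall i : nat, (N <= i)%N ->
        [/\ Y u v (k + i%:Z) = 0, Y v w (n + i%:Z) = 0 & Y u w (m + i%:Z) = 0]) ->
    \sum_(i < N) Y (Y u v (k + i%:Z)) w (m + n - i%:Z) *~ binz m i
    = \sum_(i < N)
        ((Y u (Y v w (n + i%:Z)) (m + k - i%:Z)
          - (Y v (Y u w (m + i%:Z)) (n + k - i%:Z)) *~ ((-1) ^ k))
         *~ ((-1) ^+ i * binz k i)).

Definition is_vertex_algebra : Prop :=
  [/\ va_linear, va_truncation, va_vacuum, va_creation & va_borcherds].

Definition is_subspace (M : V -> Prop) : Prop :=
  M 0 /\ forall (a : CC) x y, M x -> M y -> M (a *: x + y).

Definition C2 (x : V) : Prop :=
  exists s : seq (CC * V * V),
    x = \sum_(t <- s) t.1.1 *: Y t.1.2 t.2 (-2).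

(* M/C_2(V) is an ideal of the commutative algebra V/C_2(V), whose product is
   (a + C_2)(b + C_2) = a_{-1} b + C_2 : for all a in V and m in M, the class
   of a_{-1} m lies in M/C_2, i.e. a_{-1} m is congruent mod C_2 to an element of M. *)
Definition quotient_ideal (M : V -> Prop) : Prop :=
  forall a m, M m -> exists m', M m' /\ C2 (Y a m (-1) - m').

Definition iter_prod (v : V) (ns : seq int) : V :=
  foldr (fun n x => Y v x n) v ns.

Definition in01 (n : int) : bool := (n == 0) || (n == -1).

Definition r01 (M : V -> Prop) (v : V) : Prop :=
  exists m : nat, forall ns : seq int, all in01 ns -> (m <= size ns)%N ->
    M (iter_prod v ns).

Definition lsr01 (M : V -> Prop) (v : V) : Prop :=
  forall b : V, exists m : nat, forall (s : int) (ns : seq int),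
    in01 s -> all in01 ns -> (m <= size ns)%N -> M (Y b (iter_prod v ns) s).

Definition rsr01 (M : V -> Prop) (v : V) : Prop :=
  forall w : V, exists m : nat, forall (n : int) (ns : seq int),
    in01 n -> all in01 ns -> (m <= size ns)%N -> M (Y (iter_prod v ns) w n).

Definition sr01 (M : V -> Prop) (v : V) : Prop := lsr01 M v /\ rsr01 M v.

Definition MZ01_subspace (M : V -> Prop) : Prop :=
  forall v, r01 M v <-> sr01 M v.

End VA.

(* Main.v *)
Require Import Defs.
From HB Require Import structures.
From mathcomp Require Import all_boot all_order all_algebra complex zify.
Set Implicit Arguments. Unset Strict Implicit. Unset Printing Implicit Defensive.
Import Order.TTheory GRing.Theory Num.Theory.
Local Open Scope ring_scope.

Lemma sub0 (V : lmodType CC) (P : V -> Prop) : is_subspace P -> P 0.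
Proof. by case. Qed.
Lemma subD (V : lmodType CC) (P : V -> Prop) x y : is_subspace P -> P x -> P y -> P (x + y).
Proof. by case=> _ H Hx Hy; have := H 1 x y Hx Hy; rewrite scale1r. Qed.
Lemma subZ (V : lmodType CC) (P : V -> Prop) a x : is_subspace P -> P x -> P (a *: x).
Proof. by case=> H0 H Hx; have := H a x 0 Hx H0; rewrite addr0. Qed.
Lemma subN (V : lmodType CC) (P : V -> Prop) x : is_subspace P -> P x -> P (- x).
Proof. by move=> HP Hx; rewrite -scaleN1r; apply: subZ. Qed.
Lemma subB (V : lmodType CC) (P : V -> Prop) x y : is_subspace P -> P x -> P y -> P (x - y).
Proof. by move=> HP Hx Hy; apply: subD => //; apply: subN. Qed.
Lemma subMz (V : lmodType CC) (P : V -> Prop) x z : is_subspace P -> P x -> P (x *~ z).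
Proof. by move=> HP Hx; rewrite -scaler_int; apply: subZ. Qed.
Lemma subsum (V : lmodType CC) (P : V -> Prop) N (F : 'I_N -> V) :
  is_subspace P -> (forall i, P (F i)) -> P (\sum_(i < N) F i).
Proof.
move=> HP HF; apply: (big_ind P); [exact: sub0 | move=> x y; exact: subD | by []].
Qed.
Lemma sub_eq (V : lmodType CC) (P : V -> Prop) x y : is_subspace P -> P (x - y) -> P y -> P x.
Proof. by move=> HP H1 H2; rewrite -(subrK y x); apply: subD. Qed.

Section Lin.
End Lin.
Lemma Y0l (V : lmodType CC) (Y : V -> V -> int -> V) v n : va_linear Y -> Y 0 v n = 0.
Proof.
case=> H _; have := H 1 0 0 v n; rewrite !scale1r !addr0 => E.
by apply/esym; apply: (addrI (Y 0 v n)); rewrite addr0 -E.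
Qed.
Lemma Y0r (V : lmodType CC) (Y : V -> V -> int -> V) u n : va_linear Y -> Y u 0 n = 0.
Proof.
case=> _ H; have := H 1 u 0 0 n; rewrite !scale1r !addr0 => E.
by apply/esym; apply: (addrI (Y u 0 n)); rewrite addr0 -E.
Qed.
Lemma YDl (V : lmodType CC) (Y : V -> V -> int -> V) u u' v n : va_linear Y ->
  Y (u + u') v n = Y u v n + Y u' v n.
Proof. by case=> H _; have := H 1 u u' v n; rewrite !scale1r. Qed.
Lemma YDr (V : lmodType CC) (Y : V -> V -> int -> V) u v v' n : va_linear Y ->
  Y u (v + v') n = Y u v n + Y u v' n.
Proof. by case=> _ H; have := H 1 u v v' n; rewrite !scale1r. Qed.
Lemma YZl (V : lmodType CC) (Y : V -> V -> int -> V) a u v n : va_linear Y ->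
  Y (a *: u) v n = a *: Y u v n.
Proof. by move=> HL; have [H _] := HL; have := H a u 0 v n; rewrite Y0l // !addr0. Qed.
Lemma YZr (V : lmodType CC) (Y : V -> V -> int -> V) a u v n : va_linear Y ->
  Y u (a *: v) n = a *: Y u v n.
Proof. by move=> HL; have [_ H] := HL; have := H a u v 0 n; rewrite Y0r // !addr0. Qed.
Lemma YNl (V : lmodType CC) (Y : V -> V -> int -> V) u v n : va_linear Y ->
  Y (- u) v n = - Y u v n.
Proof. by move=> HL; rewrite -scaleN1r YZl // scaleN1r. Qed.
Lemma YNr (V : lmodType CC) (Y : V -> V -> int -> V) u v n : va_linear Y ->
  Y u (- v) n = - Y u v n.
Proof. by move=> HL; rewrite -scaleN1r YZr // scaleN1r. Qed.
Lemma YBl (V : lmodType CC) (Y : V -> V -> int -> V) u u' v n : va_linear Y ->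
  Y (u - u') v n = Y u v n - Y u' v n.
Proof. by move=> HL; rewrite YDl // YNl. Qed.
Lemma YBr (V : lmodType CC) (Y : V -> V -> int -> V) u v v' n : va_linear Y ->
  Y u (v - v') n = Y u v n - Y u v' n.
Proof. by move=> HL; rewrite YDr // YNr. Qed.

Lemma C2_sub (V : lmodType CC) (Y : V -> V -> int -> V) : is_subspace (C2 Y).
Proof.
split; first by exists [::]; rewrite big_nil.
move=> a x y [s ->] [s' ->].
exists ([seq (a * t.1.1, t.1.2, t.2) | t <- s] ++ s').
rewrite big_cat big_map /= scaler_sumr; congr (_ + _).
by apply: eq_bigr => t _; rewrite scalerA.
Qed.
Lemma C2_gen (V : lmodType CC) (Y : V -> V -> int -> V) u x : C2 Y (Y u x (-2)).
Proof. by exists [:: (1, u, x)]; rewrite big_seq1 scale1r. Qed.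

Lemma C2_map (V : lmodType CC) (Y : V -> V -> int -> V) (F : V -> V) (P : V -> Prop) :
  is_subspace P -> F 0 = 0 -> (forall a x y, F (a *: x + y) = a *: F x + F y) ->
  (forall u x, P (F (Y u x (-2)))) -> forall z, C2 Y z -> P (F z).
Proof.
move=> HP F0 FL Hg z [s ->]; elim: s => [|t s IH]; first by rewrite big_nil F0; exact: sub0.
rewrite big_cons FL; apply: subD => //; exact: subZ.
Qed.

Lemma sum_single (V : lmodType CC) N (G : nat -> V) j : (j < N)%N ->
  (forall i, (i < N)%N -> i <> j -> G i = 0) -> \sum_(i < N) G i = G j.
Proof.
move=> Hj HG; rewrite (bigD1 (Ordinal Hj)) //= big1 ?addr0 // => i Hi.
apply: HG => // Hij; move: Hi; apply/negP; rewrite negbK; apply/eqP; apply: val_inj => /=.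
exact: Hij.
Qed.

Lemma trunc_nat (V : lmodType CC) (Y : V -> V -> int -> V) u v (k : int) : va_truncation Y ->
  exists N : nat, forall i : nat, (N <= i)%N -> Y u v (k + i%:Z) = 0.
Proof.
move=> HT; have [N0 HN] := HT u v; exists `|N0 - k|%N => i Hi; apply: HN; lia.
Qed.

Lemma borch_ex (V : lmodType CC) (Y : V -> V -> int -> V) u v w (m k n : int) :
  va_truncation Y -> va_borcherds Y ->
  exists N0 : nat, forall N, (N0 <= N)%N ->
    \sum_(i < N) Y (Y u v (k + i%:Z)) w (m + n - i%:Z) *~ binz m i
    = \sum_(i < N)
        ((Y u (Y v w (n + i%:Z)) (m + k - i%:Z)
          - (Y v (Y u w (m + i%:Z)) (n + k - i%:Z)) *~ ((-1) ^ k))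
         *~ ((-1) ^+ i * binz k i)).
Proof.
move=> HT HB; have [N1 H1] := trunc_nat u v k HT; have [N2 H2] := trunc_nat v w n HT.
have [N3 H3] := trunc_nat u w m HT.
exists (maxn N1 (maxn N2 N3)) => N HN; apply: HB => i Hi; split.
- by apply: H1; lia.
- by apply: H2; lia.
- by apply: H3; lia.
Qed.

Lemma sum_single1 (V : lmodType CC) N (F : 'I_N -> V) (i0 : 'I_N) :
  (forall i : 'I_N, (i : nat) <> i0 -> F i = 0) -> \sum_(i < N) F i = F i0.
Proof.
move=> HF; rewrite (bigD1 i0) //= big1 ?addr0 // => i Hi.
apply: HF => Hij; move: Hi; apply/negP; rewrite negbK; apply/eqP; exact: val_inj.
Qed.

Ltac yeq := repeat (f_equal; try lia).

Lemma Yidx (V : lmodType CC) (Y : V -> V -> int -> V) a b (n1 n2 : int) : n1 = n2 -> Y a b n1 = Y a b n2.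
Proof. by move=> ->. Qed.

Lemma D_step (V : lmodType CC) (Y : V -> V -> int -> V) vac u x (p : nat) :
  is_vertex_algebra Y vac ->
  Y (Y u vac (-2)) x (- (p.+2)%:Z) = Y u x (- (p.+3)%:Z) *~ (p.+2)%:Z.
Proof.
case=> HL HT HV HC HB.
have [N0 HN] := borch_ex u vac x 0 (-2) (-(p.+2)%:Z) HT HB.
have := HN (maxn N0 p.+2) (leq_maxl _ _).
have H0 : (0 < maxn N0 p.+2)%N by lia.
have H1 : (p.+1 < maxn N0 p.+2)%N by lia.
rewrite (@sum_single1 _ _ _ (Ordinal H0)); last first.
  by case=> [[//|i] Hi] _; rewrite /binz /= bin0n mulr0z.
rewrite (@sum_single1 _ _ _ (Ordinal H1)); last first.
  move=> [i Hi'] /= Hi; rewrite !HV.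
  case: ifP => [/eqP ?|_]; first by exfalso; apply: Hi; lia.
  case: ifP => [/eqP ?|_]; first by exfalso; lia.
  by rewrite Y0r // mul0rz subr0 mul0rz.
rewrite /= !HV.
rewrite ifT; last by apply/eqP; lia.
case: eqP => [?|_]; first by exfalso; lia.
rewrite mul0rz subr0 bin0 mulr1z => ->.
rewrite add0n add1n binSn signrMK subr0.
congr (_ *~ _); apply: Yidx; lia.
Qed.

Lemma C2_low_nat (V : lmodType CC) (Y : V -> V -> int -> V) vac (p : nat) :
  is_vertex_algebra Y vac -> forall u x, C2 Y (Y u x (- (p.+2)%:Z)).
Proof.
move=> HVA; elim: p => [|p IH] u x; first by rewrite (@Yidx _ _ _ _ _ (-2)) //; exact: C2_gen.
have E := D_step u x p HVA.
have -> : Y u x (- (p.+3)%:Z) = ((p.+2)%:R)^-1 *: (Y u x (- (p.+3)%:Z) *~ (p.+2)%:Z).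
  rewrite -pmulrn -[Y u x _ *+ _]scaler_nat scalerA mulVf ?scale1r //.
  by rewrite pnatr_eq0.
apply: subZ; first exact: C2_sub.
rewrite -E; exact: IH.
Qed.

Lemma C2_low (V : lmodType CC) (Y : V -> V -> int -> V) vac (n : int) u x :
  is_vertex_algebra Y vac -> n <= -2 -> C2 Y (Y u x n).
Proof.
move=> HVA Hn; have [p ->] : exists p : nat, n = - (p.+2)%:Z by exists (`|n| - 2)%N; lia.
exact: C2_low_nat HVA u x.
Qed.

Lemma binz_0 (k : int) : binz k 0 = 1.
Proof. by case: k => [a|a]; rewrite /binz ?bin0 ?addn0 ?binn. Qed.

Lemma binz0S (i : nat) : binz 0 i.+1 = 0.
Proof. by rewrite /binz /= bin0n. Qed.

Lemma comm_id (V : lmodType CC) (Y : V -> V -> int -> V) vac a u x (m n : int) :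
  is_vertex_algebra Y vac ->
  exists N0 : nat, forall N, (N0 <= N)%N ->
  \sum_(i < N) Y (Y a u (0 + i%:Z)) x (m + n - i%:Z) *~ binz m i
  = Y a (Y u x n) m - Y u (Y a x m) n.
Proof.
case=> HL HT HV HC HB.
have [N0 HN] := borch_ex a u x m 0 n HT HB.
exists N0.+1 => N HN0; rewrite HN; last by lia.
have H0 : (0 < N)%N by lia.
rewrite (@sum_single1 _ _ _ (Ordinal H0)); last first.
  by case=> [[//|i] Hi] _; rewrite binz0S mulr0 mulr0z.
cbn [nat_of_ord]; rewrite binz_0 mulr1 (_ : (-1) ^+ 0 = 1) // mulr1z. rewrite (_ : (-1) ^ (0:int) = 1 :> int) // mulr1z.
yeq.
Qed.

Lemma C2_left (V : lmodType CC) (Y : V -> V -> int -> V) vac a (m : int) z :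
  is_vertex_algebra Y vac -> m <= 0 -> C2 Y z -> C2 Y (Y a z m).
Proof.
move=> HVA Hm; have [HL _ _ _ _] := HVA.
apply: (C2_map (F := fun z => Y a z m)) => //.
- exact: C2_sub.
- exact: Y0r.
- by move=> c x y; case: HL => _ ->.
move=> u x /=.
have [N0 HN] := comm_id a u x m (-2) HVA.
have E := HN N0 (leqnn _).
apply: (sub_eq (y := Y u (Y a x m) (-2))); first exact: C2_sub.
- rewrite -E; apply: subsum; first exact: C2_sub.
  move=> i; apply: subMz; first exact: C2_sub.
  apply: C2_low HVA _; lia.
- exact: C2_gen.
Qed.

Lemma C2_right (V : lmodType CC) (Y : V -> V -> int -> V) vac w (n : int) z :
  is_vertex_algebra Y vac -> n <= 0 -> C2 Y z -> C2 Y (Y z w n).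
Proof.
move=> HVA Hn; have [HL HT _ _ HB] := HVA.
apply: (C2_map (F := fun z => Y z w n)) => //.
- exact: C2_sub.
- exact: Y0l.
- by move=> c x y; case: HL => -> _.
move=> u x /=.
have [N0 HN] := borch_ex u x w 0 (-2) n HT HB.
have E := HN N0.+1 (leqnSn _).
have H0 : (0 < N0.+1)%N by [].
move: E; rewrite (@sum_single1 _ _ _ (Ordinal H0)); last first.
  by case=> [[//|i] Hi] _; rewrite binz0S mulr0z.
cbn [nat_of_ord]; rewrite binz_0 mulr1z.
rewrite (@Yidx _ _ _ _ (0 + n - 0%:Z) n); last by lia.
rewrite (@Yidx _ _ _ _ (-2 + 0%:Z) (-2)); last by lia.
move=> ->; apply: subsum; first exact: C2_sub.
move=> i; apply: subMz; first exact: C2_sub.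
apply: subB; first exact: C2_sub.
- apply: C2_low HVA _; lia.
- apply: subMz; first exact: C2_sub.
  apply: C2_low HVA _; lia.
Qed.

Lemma skew_gen (V : lmodType CC) (Y : V -> V -> int -> V) vac u v (k : int) :
  is_vertex_algebra Y vac ->
  C2 Y (Y u v (k - 1) - Y v u (k - 1) *~ ((-1) ^ k)).
Proof.
move=> HVA; have [HL HT HV HC HB] := HVA.
have [N0 HN] := borch_ex u v vac (-1) k (-1) HT HB.
have E := HN N0.+1 (leqnSn _).
have H0 : (0 < N0.+1)%N by [].
move: E; rewrite [X in _ = X -> _](@sum_single1 _ _ _ (Ordinal H0)); last first.
  case=> [[//|i] Hi] _; have [_ Hv] := HC v; have [_ Hu] := HC u.
  cbn [nat_of_ord]; rewrite Hv; last by lia.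
  by rewrite Hu ?Y0r // ?mul0rz ?subr0 ?mul0rz //; lia.
cbn [nat_of_ord]; rewrite binz_0 mulr1 (_ : (-1) ^+ 0 = 1) // mulr1z.
have [Hv _] := HC v; have [Hu _] := HC u.
rewrite (@Yidx _ _ v vac (-1 + 0%:Z) (-1)); last by lia.
rewrite (@Yidx _ _ u vac (-1 + 0%:Z) (-1)); last by lia.
rewrite Hv Hu.
rewrite (@Yidx _ _ u v (-1 + k - 0%:Z) (k - 1)); last by lia.
rewrite (@Yidx _ _ v u (-1 + k - 0%:Z) (k - 1)); last by lia.
move=> <-; apply: subsum; first exact: C2_sub.
move=> i; apply: subMz; first exact: C2_sub.
apply: C2_low HVA _; lia.
Qed.

Lemma skew0 (V : lmodType CC) (Y : V -> V -> int -> V) vac u v :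
  is_vertex_algebra Y vac -> C2 Y (Y u v (-1) - Y v u (-1)).
Proof.
move=> HVA; have := skew_gen u v 0 HVA.
by rewrite (_ : (-1) ^ (0:int) = 1 :> int) // mulr1z.
Qed.

Lemma skew1 (V : lmodType CC) (Y : V -> V -> int -> V) vac u v :
  is_vertex_algebra Y vac -> C2 Y (Y u v 0 + Y v u 0).
Proof.
move=> HVA; have := skew_gen u v 1 HVA.
by rewrite (_ : (-1) ^ (1:int) = -1 :> int) // mulrN1z opprK subrr.
Qed.

Lemma derivY (V : lmodType CC) (Y : V -> V -> int -> V) vac b u x (n : int) :
  is_vertex_algebra Y vac ->
  Y b (Y u x n) 0 = Y (Y b u 0) x n + Y u (Y b x 0) n.
Proof.
move=> HVA; have [N0 HN] := comm_id b u x 0 n HVA.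
have E := HN N0.+1 (leqnSn _).
have H0 : (0 < N0.+1)%N by [].
move: E; rewrite (@sum_single1 _ _ _ (Ordinal H0)); last first.
  by case=> [[//|i] Hi] _; rewrite binz0S mulr0z.
cbn [nat_of_ord]; rewrite binz_0 mulr1z => E.
apply/eqP; rewrite -subr_eq; apply/eqP; rewrite -E; yeq.
Qed.

Lemma assoc_C2 (V : lmodType CC) (Y : V -> V -> int -> V) vac u v w :
  is_vertex_algebra Y vac ->
  C2 Y (Y (Y u v (-1)) w (-1) - Y u (Y v w (-1)) (-1)).
Proof.
move=> HVA; have [HL HT HV HC HB] := HVA.
have [N0 HN] := borch_ex u v w 0 (-1) (-1) HT HB.
have E := HN N0.+1 (leqnSn _).
have H0 : (0 < N0.+1)%N by [].
move: E; rewrite (@sum_single1 _ _ _ (Ordinal H0)); last first.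
  by case=> [[//|i] Hi] _; rewrite binz0S mulr0z.
cbn [nat_of_ord]; rewrite binz_0 mulr1z big_ord_recl.
cbn [nat_of_ord]; rewrite binz_0 mulr1 (_ : (-1) ^+ 0 = 1) // mulr1z.
rewrite (_ : (-1) ^ (-1:int) = -1 :> int) // mulrN1z opprK.
rewrite (@Yidx _ _ u v (-1 + 0%:Z) (-1)); last by lia.
rewrite (@Yidx _ _ _ w (0 + -1 - 0%:Z) (-1)); last by lia.
rewrite (@Yidx _ _ v w (-1 + 0%:Z) (-1)); last by lia.
rewrite (@Yidx _ _ u _ (0 + -1 - 0%:Z) (-1)); last by lia.
move=> ->.
set A := Y u (Y v w (-1)) (-1).
set B := Y v _ _. set S := \sum_(i < N0) _.
have -> : A + B + S - A = B + S.
  by rewrite addrAC [A + B]addrC addrK.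
apply: subD; first exact: C2_sub.
- apply: C2_low HVA _; lia.
apply: subsum; first exact: C2_sub.
move=> i; apply: subMz; first exact: C2_sub.
apply: subB; first exact: C2_sub.
rewrite (_ : (lift ord0 i : nat) = i.+1) //.
- apply: C2_low HVA _; lia.
- apply: subMz; first exact: C2_sub.
  apply: C2_low HVA _; lia.
Qed.

Definition Pw (V : lmodType CC) (Y : V -> V -> int -> V) v t := iter_prod Y v (nseq t (-1)).

Lemma PwS (V : lmodType CC) (Y : V -> V -> int -> V) v t : Pw Y v t.+1 = Y v (Pw Y v t) (-1).
Proof. by []. Qed.

Lemma in01_le0 (n : int) : in01 n -> n <= 0.
Proof. by case/orP => /eqP ->. Qed.

Lemma sub_trans (V : lmodType CC) (P : V -> Prop) a b c :
  is_subspace P -> P (a - b) -> P (b - c) -> P (a - c).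
Proof. by move=> HP H1 H2; rewrite -[a](subrK b) -addrA; apply: subD. Qed.

Lemma sub_add_inv (V : lmodType CC) (P : V -> Prop) x y :
  is_subspace P -> P (x + y) -> P y -> P x.
Proof. by move=> HP H1 H2; rewrite -(addrK y x); apply: subB. Qed.

Lemma C2_v0 (V : lmodType CC) (Y : V -> V -> int -> V) vac v :
  is_vertex_algebra Y vac -> C2 Y (Y v v 0).
Proof.
move=> HVA; have H := skew1 v v HVA.
have -> : Y v v 0 = 2%:R^-1 *: (Y v v 0 + Y v v 0).
  by rewrite -mulr2n -[Y v v 0 *+ 2]scaler_nat scalerA mulVf ?scale1r // pnatr_eq0.
by apply: subZ => //; exact: C2_sub.
Qed.

Lemma claimB (V : lmodType CC) (Y : V -> V -> int -> V) vac v t :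
  is_vertex_algebra Y vac -> C2 Y (Y v (Pw Y v t) 0).
Proof.
move=> HVA; elim: t => [|t IH]; first exact: C2_v0 HVA.
rewrite PwS (derivY _ _ _ _ HVA) //; apply: subD; first exact: C2_sub.
- by apply: (C2_right _ HVA) => //; exact: C2_v0 HVA.
- by apply: (C2_left _ HVA).
Qed.

Lemma claimA (V : lmodType CC) (Y : V -> V -> int -> V) vac v ns :
  is_vertex_algebra Y vac -> all in01 ns ->
  C2 Y (iter_prod Y v ns) \/ ns = nseq (size ns) (-1).
Proof.
move=> HVA; elim: ns => [|n ns IH] /=; first by right.
case/andP=> Hn Hns; case: (IH Hns) => [HC|Hs].
- left; rewrite /iter_prod /=; apply: (C2_left _ HVA) _ HC; exact: in01_le0.
- case/orP: Hn => /eqP Hn; subst n.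
  + left; rewrite Hs; exact: (claimB v (size ns) HVA).
  + by right; rewrite {1}Hs.
Qed.

Lemma iterD (V : lmodType CC) (Y : V -> V -> int -> V) v j x y : va_linear Y ->
  iter j (fun z => Y v z (-1)) (x + y) = iter j (fun z => Y v z (-1)) x + iter j (fun z => Y v z (-1)) y.
Proof. by move=> HL; elim: j => [|j IH] //=; rewrite IH YDr. Qed.

Lemma lemE (V : lmodType CC) (Y : V -> V -> int -> V) vac v j y :
  is_vertex_algebra Y vac ->
  C2 Y (iter j.+1 (fun z => Y v z (-1)) y - Y (Pw Y v j) y (-1)).
Proof.
move=> HVA; have [HL _ _ _ _] := HVA.
elim: j => [|j IH]; first by rewrite /= subrr; exact: sub0 (C2_sub Y).
rewrite iterS PwS.
apply: (sub_trans (b := Y v (Y (Pw Y v j) y (-1)) (-1))); first exact: C2_sub.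
- by rewrite -YBr //; apply: (C2_left _ HVA).
- rewrite -opprB; apply: subN; first exact: C2_sub.
  exact: (assoc_C2 _ _ _ HVA).
Qed.

Lemma main_dir (V : lmodType CC) (Y : V -> V -> int -> V) vac
  (HVA : is_vertex_algebra Y vac)
  (M : V -> Prop) (HM : is_subspace M)
  (HC2 : forall x, C2 Y x -> M x)
  (Hid : quotient_ideal Y M) v (m : nat)
  (Hr : forall t, (m <= t)%N -> M (Pw Y v t)) :
  sr01 Y M v.
Proof.
have [HL HT HV HC HB] := HVA.
pose f := fun z => Y v z (-1).
have ML : forall a x, M x -> M (Y a x (-1)).
  move=> a x Hx; have [m' [Hm' Hc]] := Hid a x Hx.
  by apply: (sub_eq HM) Hm'; apply: HC2.
have MR : forall a x, M x -> M (Y x a (-1)).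
  move=> a x Hx; apply: (sub_eq HM (y := Y a x (-1))); last exact: ML.
  by apply: HC2; exact: (skew0 _ _ HVA).
have Miter : forall j x, M x -> M (iter j f x).
  by move=> j x Hx; elim: j => [|j IH] //=; apply: ML.
have ME : forall j y, (m <= j)%N -> M (iter j.+1 f y).
  move=> j y Hj; apply: (sub_eq HM (y := Y (Pw Y v j) y (-1))).
  - by apply: HC2; exact: (lemE _ _ _ HVA).
  - by apply: MR; apply: Hr.
have MQ : forall b t j, (m.*2.+1 <= j + t)%N -> M (iter j f (Y b (Pw Y v t) 0)).
  move=> b; elim=> [|t IH] j Hjt.
  - case: j Hjt => [|j'] Hjt; first by lia.
    by apply: ME; lia.
  - rewrite PwS (derivY _ _ _ _ HVA) iterD //; apply: subD => //.
    + case: (leqP m t) => Hmt.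
      * by apply: Miter; apply: ML; apply: Hr.
      * case: j Hjt => [|j'] Hjt; first by lia.
        by apply: ME; lia.
    + rewrite -iterSr; apply: IH; lia.
split.
- move=> b; exists m.*2.+1 => s ns Hs Hns Hsz.
  case: (claimA v HVA Hns) => [HCC|Hnseq].
  + by apply: HC2; apply: (C2_left _ HVA) => //; exact: in01_le0.
  + rewrite Hnseq -/(Pw Y v (size ns)).
    case/orP: Hs => /eqP ->.
    * by apply: (MQ b (size ns) 0); lia.
    * by apply: ML; apply: Hr; lia.
- move=> w; exists m.*2.+1 => n ns Hn Hns Hsz.
  case: (claimA v HVA Hns) => [HCC|Hnseq].
  + by apply: HC2; apply: (C2_right _ HVA) => //; exact: in01_le0.
  + rewrite Hnseq -/(Pw Y v (size ns)).
    case/orP: Hn => /eqP ->.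
    * apply: (sub_add_inv HM (y := Y w (Pw Y v (size ns)) 0)).
      - by apply: HC2; exact: (skew1 _ _ HVA).
      - by apply: (MQ w (size ns) 0); lia.
    * by apply: MR; apply: Hr; lia.
Qed.

Lemma all_nseq01 t : all in01 (nseq t (-1)).
Proof. by elim: t. Qed.

Unset Implicit Arguments.
Theorem mainTheorem9 (V : lmodType CC) (Y : V -> V -> int -> V) (vac : V)
  (HVA : is_vertex_algebra Y vac)
  (M : V -> Prop) (HM : is_subspace M)
  (HC2 : forall x, C2 Y x -> M x)
  (Hid : quotient_ideal Y M) :
  MZ01_subspace Y M.
Proof.
move=> v; split.
- case=> m Hm; apply: (main_dir HVA HM HC2 Hid (m := m)) => t Ht.
  by apply: Hm; rewrite ?all_nseq01 ?size_nseq.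
- case=> Hl _; have [m Hm] := Hl vac; exists m => ns Hns Hsz.
  have [_ _ HV _ _] := HVA.
  have := Hm (-1) ns isT Hns Hsz.
  by rewrite HV.
Qed.
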